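(* For $s_1,s_2\in\mathbb{Z}_{\ge0}$ and integers $n_1,n_2\ge1$: \begin{align*} ((\mathcal{T}*\phi)^{n_2-n_1}*\mathcal{T})(s_2,s_1)&=\Gamma(n_1,-\tfrac12,s_1;n_2,\tfrac12,s_2)\quad(n_1\le n_2),\\ (\mathcal{T}*\phi)^{n_2-n_1}(s_2,s_1)&=\Gamma(n_1,\tfrac12,s_1;n_2,\tfrac12,s_2)\quad(n_1<n_2),\\ ((\phi*\mathcal{T})^{n_2-n_1-1}*\phi)(s_2,s_1)&=\Gamma(n_1,\tfrac12,s_1;n_2,-\tfrac12,s_2)\quad(n_1<n_2),\\ (\phi*\mathcal{T})^{n_2-n_1}(s_2,s_1)&=\Gamma(n_1,-\tfrac12,s_1;n_2,-\tfrac12,s_2)\quad(n_1<n_2). \end{align*}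
   Context: Matrices on $\mathbb{Z}_{\ge0}\times\mathbb{Z}_{\ge0}$: $\mathcal{T}(x,y)=0$ if $x<y$, $1$ if $x\ge y=0$, $2$ if $x\ge y>0$; $\phi(x,y)=1$ if $x>y$, $0$ otherwise; $(f*g)(x,y)=\sum_{z\ge0}f(x,z)g(z,y)$, and the $0$-th power is the identity. $\mathsf{J}^{(-1/2,-1/2)}_s(\cos\theta)=\cos s\theta$, $\mathsf{J}^{(1/2,-1/2)}_s(\cos\theta)=\sin((s+\frac12)\theta)/\sin(\theta/2)$; $W^{(-1/2,-1/2)}(0)=1$, $W^{(-1/2,-1/2)}(s)=2$ ($s>0$), $W^{(1/2,-1/2)}\equiv1$. For $a_1,a_2\in\{\pm\frac12\}$ with $2n_1+a_1<2n_2+a_2$, \[\Gamma(n_1,a_1,s_1;n_2,a_2,s_2)=-\frac{W^{(a_1,-1/2)}(s_1)}{\pi}\frac1{2\pi i}\int_{-1}^1\oint\mathsf{J}^{(a_1,-1/2)}_{s_1}(x)\mathsf{J}^{(a_2,-1/2)}_{s_2}(u)(u-1)^{n_1-n_2}\frac{(1-x)^{a_1}(1+x)^{-1/2}}{x-u}\,du\,dx,\] where the $u$-contour is a positively oriented simple loop containing $[-1,1]$. *)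

(* Defs.v *)
From Stdlib Require Import Reals ZArith.
From Coquelicot Require Import Coquelicot.

Definition mat := nat -> nat -> R.

Definition mconv (f g : mat) : mat :=
  fun x y => Series (fun z => f x z * g z y)%R.

Definition mid : mat := fun x y => if Nat.eqb x y then 1%R else 0%R.

Fixpoint mpow (f : mat) (k : nat) : mat :=
  match k with
  | O => mid
  | S k' => mconv (mpow f k') f
  end.

Definition Tm : mat := fun x y =>
  if Nat.ltb x y then 0%R else if Nat.eqb y 0 then 1%R else 2%R.

Definition phim : mat := fun x y => if Nat.ltb y x then 1%R else 0%R.

Inductive half := mhalf | phalf.
Definition aval (a : half) : R :=
  match a with mhalf => (-(1/2))%R | phalf => (1/2)%R end.

Definition Wt (a : half) (s : nat) : R :=
  match a with
  | mhalf => match s with O => 1%R | _ => 2%R end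
  | phalf => 1%R
  end.

Open Scope C_scope.

(** Jacobi polynomials J^{(a,-1/2)}_s, as polynomial functions on C, via the
    three-term recurrence (J_{s+1} = 2 z J_s - J_{s-1}); see the lemmas
    [J_mhalf_cos] and [J_phalf_cos] below connecting them to the defining
    trigonometric formulas. *)
Fixpoint Jpair (a : half) (s : nat) (z : C) : C * C :=
  match s with
  | O => (RtoC 1, match a with mhalf => z | phalf => 2 * z + 1 end)
  | S s' => let (p, q) := Jpair a s' z in (q, 2 * z * q - p)
  end.
Definition J (a : half) (s : nat) (z : C) : C := fst (Jpair a s z).

Definition Cpowz (z : C) (k : Z) : C :=
  if (0 <=? k)%Z then Cpow z (Z.to_nat k) else / Cpow z (Z.to_nat (- k)).

Definition circ (c : C) (r th : R) : C := c + (RtoC r) * (cos th, sin th).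
Definition dcirc (r th : R) : C := (RtoC r) * (- sin th, cos th)%R.

Definition Gintegrand (n1 : nat) (a1 : half) (s1 : nat)
  (n2 : nat) (a2 : half) (s2 : nat) (x : R) (u : C) : C :=
  J a1 s1 (RtoC x) * J a2 s2 u * Cpowz (u - 1) (Z.of_nat n1 - Z.of_nat n2)%Z
  * (RtoC (Rpower (1 - x) (aval a1) * Rpower (1 + x) (- (1/2))))
  / (RtoC x - u).

(** [Gamma_is ... c r v]: with the u-contour being the positively oriented
    circle of centre c and radius r, the improper integral over x in (-1,1)
    of the contour integral over u exists and
    - W/pi * 1/(2 pi i) * int_{-1}^1 oint ... du dx  =  v. *)
Definition Gamma_is (n1 : nat) (a1 : half) (s1 : nat)
  (n2 : nat) (a2 : half) (s2 : nat) (c : C) (r : R) (v : C) : Prop :=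
  exists I : C,
    @is_RInt_gen C_R_NormedModule
      (fun x : R => @RInt C_R_CompleteNormedModule
         (fun th => Gintegrand n1 a1 s1 n2 a2 s2 x (circ c r th) * dcirc r th)
         0 (2 * PI))
      (at_right (-1)) (at_left 1) I
    /\ v = RtoC (- Wt a1 s1 / PI) * (/ (RtoC (2 * PI) * Ci)) * I.

Close Scope C_scope.

(** Sanity lemmas: the recurrence-defined J agree with the paper's
    trigonometric definition
    J^{(-1/2,-1/2)}_s(cos t) = cos(s t),
    J^{(1/2,-1/2)}_s(cos t) = sin((s+1/2) t)/sin(t/2). *)
Lemma Jpair_rec (a : half) (t : R) (f : nat -> R)
  (H0 : f 0%nat = 1%R)
  (H1 : RtoC (f 1%nat) = snd (Jpair a 0 (RtoC (cos t))))
  (Hrec : forall k, f (S (S k)) = (2 * cos t * f (S k) - f k)%R) :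
  forall s, Jpair a s (RtoC (cos t)) = (RtoC (f s), RtoC (f (S s))).
Proof.
  induction s as [|s IH].
  - simpl in H1 |- *. rewrite H0, H1. reflexivity.
  - simpl. rewrite IH. rewrite Hrec. f_equal.
    unfold RtoC, Cmult, Cminus, Cplus, Copp; simpl. f_equal; ring.
Qed.

Lemma J_mhalf_cos (s : nat) (t : R) :
  J mhalf s (RtoC (cos t)) = RtoC (cos (INR s * t)).
Proof.
  unfold J. rewrite (Jpair_rec mhalf t (fun k => cos (INR k * t))); auto.
  - simpl. rewrite Rmult_0_l, cos_0. reflexivity.
  - simpl. rewrite Rmult_1_l. reflexivity.
  - intros k. rewrite !S_INR.
    replace ((INR k + 1 + 1) * t)%R with ((INR k + 1) * t + t)%R by ring.
    replace (INR k * t)%R with ((INR k + 1) * t - t)%R by ring.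
    rewrite cos_plus, cos_minus. ring.
Qed.

Lemma J_phalf_cos (s : nat) (t : R) :
  sin (t / 2) <> 0%R ->
  J phalf s (RtoC (cos t)) = RtoC (sin ((INR s + 1/2) * t) / sin (t / 2)).
Proof.
  intros Hs. unfold J.
  rewrite (Jpair_rec phalf t (fun k => sin ((INR k + 1/2) * t) / sin (t / 2))%R);
    auto.
  - simpl.  replace ((0 + 1/2) * t)%R with (t/2)%R by field. field; auto.
  - simpl. unfold RtoC, Cmult, Cplus; simpl. f_equal; [|ring].
    set (h := (t / 2)%R) in *.
    replace ((1 + 1/2) * t)%R with (h + 2 * h)%R by (unfold h; field).
    replace t with (2 * h)%R by (unfold h; field).
    rewrite sin_plus, cos_2a, sin_2a.
    pose proof (sin2_cos2 h) as E. unfold Rsqr in E.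
    field_simplify; auto.
    replace (- sin h ^ 3 + 3 * sin h * cos h ^ 2)%R
      with (sin h * (-2 * sin h ^ 2 + 2 * cos h ^ 2 + 1))%R
      by (rewrite <- E; ring).
    field. auto.
  - intros k. rewrite !S_INR.
    replace ((INR k + 1 + 1 + 1/2) * t)%R with ((INR k + 1 + 1/2) * t + t)%R by ring.
    replace ((INR k + 1/2) * t)%R with ((INR k + 1 + 1/2) * t - t)%R by ring.
    rewrite sin_plus, sin_minus. field. auto.
Qed.

(* Main.v *)
Require Import Defs.
From Stdlib Require Import Reals ZArith Lra Lia FunctionalExtensionality.
From Coquelicot Require Import Coquelicot.

Lemma is_derive_eq (f : R -> R) x l l' : is_derive f x l -> l = l' -> is_derive f x l'.
Proof. intros H ->; auto. Qed.
Lemma Rder_const k t : is_derive (fun _ : R => k) t 0%R.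
Proof. eapply is_derive_eq. apply is_derive_const. reflexivity. Qed.
Lemma Rder_plus (f g : R -> R) t a b : is_derive f t a -> is_derive g t b ->
  is_derive (fun s => f s + g s)%R t (a + b)%R.
Proof. intros; apply (is_derive_plus f g); auto. Qed.
Lemma Rder_opp (f : R -> R) t a : is_derive f t a -> is_derive (fun s => - f s)%R t (- a)%R.
Proof. intros; apply (is_derive_opp f); auto. Qed.
Lemma Rder_minus (f g : R -> R) t a b : is_derive f t a -> is_derive g t b ->
  is_derive (fun s => f s - g s)%R t (a - b)%R.
Proof. intros; apply (is_derive_minus f g); auto. Qed.
Lemma Rder_mult (f g : R -> R) t a b : is_derive f t a -> is_derive g t b ->
  is_derive (fun s => f s * g s)%R t (a * g t + f t * b)%R.
Proof. intros; apply (Derive.is_derive_mult f g); auto. Qed.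
Lemma Rder_ext (f g : R -> R) t a : (forall s, f s = g s) -> is_derive f t a -> is_derive g t a.
Proof. intros H; apply is_derive_ext; auto. Qed.

Definition CD (f : R -> C) (t : R) (df : C) : Prop :=
  is_derive (fun s => fst (f s)) t (fst df) /\ is_derive (fun s => snd (f s)) t (snd df).
Definition CDx (f : R -> C) (t : R) : Prop := exists df, CD f t df.

Lemma CD_eq f t df df' : CD f t df -> df = df' -> CD f t df'.
Proof. intros H ->; auto. Qed.

Lemma CD_ext f g t df : (forall s, f s = g s) -> CD f t df -> CD g t df.
Proof.
  intros H [H1 H2]; split.
  - eapply Rder_ext; [|exact H1]. intros; simpl; rewrite H; auto.
  - eapply Rder_ext; [|exact H2]. intros; simpl; rewrite H; auto.
Qed.

Lemma CD_const k t : CD (fun _ => k) t 0%C.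
Proof. split; simpl; apply Rder_const. Qed.

Lemma CD_plus f g t df dg : CD f t df -> CD g t dg -> CD (fun s => f s + g s)%C t (df + dg)%C.
Proof.
  intros [H1 H2] [H3 H4]; split; simpl.
  - apply (Rder_plus (fun s => fst (f s)) (fun s => fst (g s))); auto.
  - apply (Rder_plus (fun s => snd (f s)) (fun s => snd (g s))); auto.
Qed.

Lemma CD_opp f t df : CD f t df -> CD (fun s => - f s)%C t (- df)%C.
Proof.
  intros [H1 H2]; split; simpl.
  - apply (Rder_opp (fun s => fst (f s))); auto.
  - apply (Rder_opp (fun s => snd (f s))); auto.
Qed.

Lemma CD_minus f g t df dg : CD f t df -> CD g t dg -> CD (fun s => f s - g s)%C t (df - dg)%C.
Proof. intros; apply CD_plus; auto; apply CD_opp; auto. Qed.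

Lemma CD_mult f g t df dg : CD f t df -> CD g t dg ->
  CD (fun s => f s * g s)%C t (df * g t + f t * dg)%C.
Proof.
  intros [H1 H2] [H3 H4]; split; simpl.
  - apply (Rder_ext (fun s => fst (f s) * fst (g s) - snd (f s) * snd (g s))%R).
    { intros; destruct (f s), (g s); reflexivity. }
    eapply is_derive_eq.
    apply Rder_minus; apply (Rder_mult (fun s => _ (f s)) (fun s => _ (g s))); eauto.
    destruct (f t), (g t), df, dg; simpl. ring.
  - apply (Rder_ext (fun s => fst (f s) * snd (g s) + snd (f s) * fst (g s))%R).
    { intros; destruct (f s), (g s); reflexivity. }
    eapply is_derive_eq.
    apply Rder_plus; apply (Rder_mult (fun s => _ (f s)) (fun s => _ (g s))); eauto.
    destruct (f t), (g t), df, dg; simpl; ring.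
Qed.

Lemma CD_inv f t df : CD f t df -> f t <> 0%C -> CD (fun s => / f s)%C t (- df / (f t * f t))%C.
Proof.
  intros [H1 H2] Hnz.
  pose (N := fun s => (fst (f s) ^ 2 + snd (f s) ^ 2)%R).
  assert (Hn : N t <> 0%R).
  { unfold N; destruct (f t) as [a b]; simpl. intro E. apply Hnz.
    assert (a = 0 /\ b = 0)%R as [-> ->] by nra. reflexivity. }
  assert (HN : is_derive N t (fst df * fst (f t) + fst (f t) * fst df + (snd df * snd (f t) + snd (f t) * snd df))%R).
  { apply (Rder_ext (fun s => fst (f s) * fst (f s) + snd (f s) * snd (f s))%R).
    { intros; unfold N; ring. }
    apply Rder_plus; apply (Rder_mult (fun s => _ (f s)) (fun s => _ (f s))); auto. }
  split.
  - apply (Rder_ext (fun s => fst (f s) / N s)%R).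
    { intros s; reflexivity. }
    eapply is_derive_eq. apply (is_derive_div (fun s => fst (f s)) N); eauto.
    unfold N in *. destruct (f t) as [a b], df as [e h]; simpl in *. field. split; [|nra]. intro E; apply Hn. nra.
  - apply (Rder_ext (fun s => - snd (f s) / N s)%R).
    { intros s; reflexivity. }
    eapply is_derive_eq. apply (is_derive_div (fun s => - snd (f s))%R N);
      [apply (Rder_opp (fun s => snd (f s))); exact H2 | exact HN | exact Hn].
    unfold N in *. destruct (f t) as [a b], df as [e h]; simpl in *. field. split; [|nra]. intro E; apply Hn. nra.
Qed.

Lemma CD_scal k f t df : CD f t df -> CD (fun s => k * f s)%C t (k * df)%C.
Proof.
  intros H. eapply CD_eq. apply (CD_mult (fun _ => k) f _ 0%C df); [apply CD_const|exact H].
  ring.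
Qed.

Lemma CD_pow f t df n : CD f t df ->
  CD (fun s => Cpow (f s) (S n)) t (RtoC (INR (S n)) * Cpow (f t) n * df)%C.
Proof.
  intros H. induction n.
  - eapply CD_eq. apply (CD_ext f). intros s; unfold Cpow; ring. exact H. change (INR 1) with 1%R. unfold Cpow. ring.
  - eapply CD_eq. apply (CD_ext (fun s => f s * Cpow (f s) (S n))%C).
    intros; reflexivity. apply (CD_mult _ _ _ _ _ H IHn).
    rewrite (S_INR (S n)). rewrite RtoC_plus. change (Cpow (f t) (S n)) with (f t * Cpow (f t) n)%C. ring.
Qed.

Lemma CD_circ c r t : CD (circ c r) t (dcirc r t).
Proof.
  unfold circ, dcirc; split; simpl.
  - apply (Rder_ext (fun s => fst c + (r * cos s - 0 * sin s))%R); [intros; reflexivity|].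
    auto_derive; auto. ring.
  - apply (Rder_ext (fun s => snd c + (r * sin s + 0 * cos s))%R); [intros; reflexivity|].
    auto_derive; auto. ring.
Qed.

Lemma CD_dcirc r t : CD (dcirc r) t (RtoC r * ((- cos t)%R, (- sin t)%R))%C.
Proof.
  unfold dcirc; split; simpl.
  - apply (Rder_ext (fun s => (r * - sin s - 0 * cos s))%R); [intros; reflexivity|].
    auto_derive; auto. ring.
  - apply (Rder_ext (fun s => (r * cos s + 0 * - sin s))%R); [intros; reflexivity|].
    auto_derive; auto. ring.
Qed.

Lemma CDx_cont f t : CDx f t ->
  continuous (fun s => fst (f s)) t /\ continuous (fun s => snd (f s)) t.
Proof.
  intros [df [H1 H2]]; split; apply (ex_derive_continuous (K:=R_AbsRing) (V:=R_NormedModule)); eexists; eauto.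
Qed.

Lemma CFTC (F f : R -> C) a b : a <= b ->
  (forall t, a <= t <= b -> CD F t (f t)) ->
  (forall t, a <= t <= b -> CDx f t) ->
  @is_RInt C_R_NormedModule f a b (F b - F a)%C.
Proof.
  intros Hab HD HC.
  assert (E : (F b - F a)%C = (fst (F b) - fst (F a), snd (F b) - snd (F a))%R).
  { destruct (F b), (F a); unfold Cminus, Cplus, Copp; simpl. f_equal; ring. }
  rewrite E. apply (is_RInt_fct_extend_pair (U := R_NormedModule) (V := R_NormedModule)).
  - apply (is_RInt_derive (V := R_CompleteNormedModule) (fun s => fst (F s)) (fun s => fst (f s))).
    + intros x Hx; rewrite Rmin_left, Rmax_right in Hx by auto. apply HD; auto.
    + intros x Hx; rewrite Rmin_left, Rmax_right in Hx by auto. apply CDx_cont, HC; auto.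
  - apply (is_RInt_derive (V := R_CompleteNormedModule) (fun s => snd (F s)) (fun s => snd (f s))).
    + intros x Hx; rewrite Rmin_left, Rmax_right in Hx by auto. apply HD; auto.
    + intros x Hx; rewrite Rmin_left, Rmax_right in Hx by auto. apply CDx_cont, HC; auto.
Qed.

Lemma is_RInt_Cscal (f : R -> C) a b v k :
  @is_RInt C_R_NormedModule f a b v ->
  @is_RInt C_R_NormedModule (fun t => k * f t)%C a b (k * v)%C.
Proof.
  intros H.
  pose proof (is_RInt_fct_extend_fst (U := R_NormedModule) (V := R_NormedModule) f a b v H) as H1.
  pose proof (is_RInt_fct_extend_snd (U := R_NormedModule) (V := R_NormedModule) f a b v H) as H2.
  destruct k as [k1 k2].
  assert (E : ((k1, k2) * v)%C = ((k1 * fst v - k2 * snd v)%R, (k1 * snd v + k2 * fst v)%R)).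
  { destruct v; reflexivity. }
  rewrite E. apply (is_RInt_fct_extend_pair (U := R_NormedModule) (V := R_NormedModule)).
  - eapply is_RInt_ext; [intros; reflexivity|].
    apply (is_RInt_minus (V := R_NormedModule) (fun t => k1 * fst (f t)) (fun t => k2 * snd (f t)))%R.
    + apply (is_RInt_scal (V := R_NormedModule) (fun t => fst (f t))); auto.
    + apply (is_RInt_scal (V := R_NormedModule) (fun t => snd (f t))); auto.
  - eapply is_RInt_ext; [intros; simpl; reflexivity|].
    apply (is_RInt_plus (V := R_NormedModule) (fun t => k1 * snd (f t)) (fun t => k2 * fst (f t)))%R.
    + apply (is_RInt_scal (V := R_NormedModule) (fun t => snd (f t))); auto.
    + apply (is_RInt_scal (V := R_NormedModule) (fun t => fst (f t))); auto.
Qed.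

Lemma RtoC_nz (x : R) : x <> 0%R -> RtoC x <> 0%C.
Proof. intros H E. apply H. apply (f_equal fst) in E. exact E. Qed.

Lemma Ceq (a b : C) : a = b -> a = b.
Proof. auto. Qed.

Definition CI (c : C) (r : R) (f : C -> C) (v : C) : Prop :=
  @is_RInt C_R_NormedModule (fun th => (f (circ c r th) * dcirc r th)%C) 0 (2 * PI) v.

Lemma circ_mod c r th : 0 <= r -> Cmod (circ c r th - c) = r.
Proof.
  intros Hr. unfold circ.
  replace (c + RtoC r * (cos th, sin th) - c)%C with (RtoC r * (cos th, sin th))%C by ring.
  rewrite Cmod_mult, Cmod_R, Rabs_right by lra.
  assert (E : (cos th ^ 2 + sin th ^ 2 = 1)%R).
  { pose proof (sin2_cos2 th) as E; unfold Rsqr in E; nra. }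
  unfold Cmod; cbn [fst snd]. rewrite E, sqrt_1. ring.
Qed.

Lemma CI_ext c r f g v : 0 <= r -> (forall u, Cmod (u - c) = r -> f u = g u) -> CI c r f v -> CI c r g v.
Proof.
  intros Hr H HI. unfold CI in *. eapply is_RInt_ext; [|exact HI].
  intros x _. cbv beta. rewrite H; auto. apply circ_mod; auto.
Qed.

Lemma CI_plus c r f g v w : CI c r f v -> CI c r g w -> CI c r (fun u => f u + g u)%C (v + w)%C.
Proof.
  unfold CI; intros H1 H2.
  eapply is_RInt_ext; [|apply (is_RInt_plus _ _ _ _ _ _ H1 H2)].
  intros; simpl. change (plus ?a ?b) with (Cplus a b). ring.
Qed.

Lemma CI_scal c r f v k : CI c r f v -> CI c r (fun u => k * f u)%C (k * v)%C.
Proof.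
  unfold CI; intros H1.
  eapply is_RInt_ext; [|apply (is_RInt_Cscal _ _ _ _ k H1)].
  intros; simpl. ring.
Qed.

Lemma CI_opp c r f v : CI c r f v -> CI c r (fun u => - f u)%C (- v)%C.
Proof.
  intros H. replace (- v)%C with ((- (1)) * v)%C.
  - unfold CI in *. eapply is_RInt_ext; [|apply (is_RInt_Cscal _ _ _ _ (- (1))%C H)].
    intros; cbv beta. apply Ceq. ring.
  - ring.
Qed.

Lemma CI_minus c r f g v w : CI c r f v -> CI c r g w -> CI c r (fun u => f u - g u)%C (v - w)%C.
Proof. intros; apply CI_plus; auto; apply CI_opp; auto. Qed.

Lemma CDx_ext f g t : (forall s, f s = g s) -> CDx f t -> CDx g t.
Proof. intros H [d Hd]; exists d; eapply CD_ext; eauto. Qed.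
Lemma CDx_const k t : CDx (fun _ => k) t.
Proof. eexists; apply CD_const. Qed.
Lemma CDx_plus f g t : CDx f t -> CDx g t -> CDx (fun s => f s + g s)%C t.
Proof. intros [a Ha] [b Hb]; eexists; apply CD_plus; eauto. Qed.
Lemma CDx_minus f g t : CDx f t -> CDx g t -> CDx (fun s => f s - g s)%C t.
Proof. intros [a Ha] [b Hb]; eexists; apply CD_minus; eauto. Qed.
Lemma CDx_mult f g t : CDx f t -> CDx g t -> CDx (fun s => f s * g s)%C t.
Proof. intros [a Ha] [b Hb]; eexists; apply CD_mult; eauto. Qed.
Lemma CDx_inv f t : CDx f t -> f t <> 0%C -> CDx (fun s => / f s)%C t.
Proof. intros [a Ha] H; eexists; apply CD_inv; eauto. Qed.
Lemma CDx_pow f t n : CDx f t -> CDx (fun s => Cpow (f s) n) t.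
Proof. intros [a Ha]; destruct n. exists 0%C; apply (CD_ext (fun _ => 1%C)); [intros; reflexivity|apply CD_const]. eexists; apply CD_pow; eauto. Qed.
Lemma CDx_circ c r t : CDx (circ c r) t.
Proof. eexists; apply CD_circ. Qed.
Lemma CDx_dcirc r t : CDx (dcirc r) t.
Proof. eexists; apply CD_dcirc. Qed.

Lemma circ_2PI c r : circ c r (2 * PI) = circ c r 0.
Proof. unfold circ. rewrite cos_2PI, sin_2PI, cos_0, sin_0. reflexivity. Qed.

Lemma CI_FTC c r f F : (forall t, CD F t (f (circ c r t) * dcirc r t)%C) ->
  (forall t, CDx (fun th => f (circ c r th) * dcirc r th)%C t) ->
  CI c r f (F (2 * PI)%R - F 0%R)%C.
Proof.
  intros H1 H2. unfold CI. apply CFTC. pose proof PI_RGT_0; lra.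
  intros; apply H1. intros; apply H2.
Qed.

Lemma CI_val c r f v v' : CI c r f v -> v = v' -> CI c r f v'.
Proof. intros H ->; auto. Qed.

Lemma CI_pow c r a n : CI c r (fun u => Cpow (u - a) n) 0%C.
Proof.
  set (F := fun th => (/ RtoC (INR (S n)) * Cpow (circ c r th - a) (S n))%C).
  eapply CI_val. apply (CI_FTC _ _ _ F).
  - intros t. unfold F. eapply CD_eq. apply CD_scal. apply CD_pow.
    apply (CD_minus (circ c r) (fun _ => a)). apply CD_circ. apply CD_const.
    cbv beta. apply Ceq. field. apply RtoC_nz. pose proof (pos_INR n); rewrite S_INR; lra.
  - intros t. apply CDx_mult. apply CDx_pow. apply CDx_minus. apply CDx_circ. apply CDx_const.
    apply CDx_dcirc.
  - unfold F. rewrite circ_2PI. apply Ceq. ring.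
Qed.

Lemma circ_neq c r a t : (Cmod (a - c) < r)%R -> (circ c r t - a)%C <> 0%C.
Proof.
  intros H E. assert (Hr : (0 <= r)%R) by (pose proof (Cmod_ge_0 (a - c)); lra).
  pose proof (circ_mod c r t Hr) as M.
  assert (Ea : circ c r t = a).
  { replace (circ c r t) with (circ c r t - a + a)%C by ring. rewrite E. ring. }
  rewrite Ea in M. lra.
Qed.

Lemma CI_negpow c r a n : (Cmod (a - c) < r)%R ->
  CI c r (fun u => / Cpow (u - a) (S (S n)))%C 0%C.
Proof.
  intros Ha.
  set (F := fun th => (- / RtoC (INR (S n)) * / Cpow (circ c r th - a) (S n))%C).
  eapply CI_val. apply (CI_FTC _ _ _ F).
  - intros t. unfold F. eapply CD_eq. apply CD_scal. apply CD_inv. apply CD_pow.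
    apply (CD_minus (circ c r) (fun _ => a)). apply CD_circ. apply CD_const.
    apply Cpow_nz. apply circ_neq; auto.
    cbv beta. apply Ceq.
    pose proof (circ_neq c r a t Ha) as Hw.
    pose proof (Cpow_nz _ n Hw) as Hp.
    change (Cpow (circ c r t - a) (S (S n))) with ((circ c r t - a) * ((circ c r t - a) * Cpow (circ c r t - a) n))%C.
    change (Cpow (circ c r t - a) (S n)) with ((circ c r t - a) * Cpow (circ c r t - a) n)%C.
    field. repeat split; auto. apply RtoC_nz. pose proof (pos_INR n); rewrite S_INR; lra.
  - intros t. apply CDx_mult. apply CDx_inv. apply CDx_pow. apply CDx_minus. apply CDx_circ. apply CDx_const.
    apply Cpow_nz; apply circ_neq; auto. apply CDx_dcirc.
  - unfold F. rewrite circ_2PI. apply Ceq. ring.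
Qed.

Lemma CI_inv c r a : (Cmod (a - c) < r)%R ->
  CI c r (fun u => / (u - a))%C (0%R, (2 * PI)%R).
Proof.
  intros Ha. destruct c as [c1 c2], a as [a1 a2].
  assert (Hp : ((a1 - c1)^2 + (a2 - c2)^2 < r^2)%R).
  { unfold Cmod in Ha. cbn [fst snd Cminus Cplus Copp] in Ha.
    set (q := ((a1 + - c1) ^ 2 + (a2 + - c2) ^ 2)%R) in Ha.
    assert (Hq : (0 <= q)%R) by (unfold q; apply Rplus_le_le_0_compat; apply pow2_ge_0).
    pose proof (sqrt_sqrt q Hq). pose proof (sqrt_pos q).
    replace ((a1 - c1) ^ 2 + (a2 - c2) ^ 2)%R with q by (unfold q; ring). nra. }
  assert (Hr : (0 < r)%R) by (pose proof (Cmod_ge_0 ((a1,a2) - (c1,c2))%C); lra).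
  set (p1 := (a1 - c1)%R) in *. set (p2 := (a2 - c2)%R) in *.
  set (X := fun s => (r * cos s - p1)%R).
  set (Y := fun s => (r * sin s - p2)%R).
  set (A := fun s => (X s * cos s + Y s * sin s)%R).
  set (B := fun s => (Y s * cos s - X s * sin s)%R).
  assert (HA : forall s, (0 < A s)%R).
  { intros s. unfold A, X, Y. pose proof (sin2_cos2 s) as E. unfold Rsqr in E.
    assert (H1 : ((p1 * cos s + p2 * sin s)^2 <= p1^2 + p2^2)%R).
    { assert (0 <= (p1 * sin s - p2 * cos s)^2)%R by apply pow2_ge_0.
      assert (Hid : ((p1 * cos s + p2 * sin s)^2 + (p1 * sin s - p2 * cos s)^2 = (p1^2+p2^2)*(sin s * sin s + cos s * cos s))%R) by ring.
      rewrite E in Hid. lra. }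
    assert (H2 : (p1 * cos s + p2 * sin s < r)%R).
    { destruct (Rle_dec (p1 * cos s + p2 * sin s) 0). lra.
      apply Rnot_le_lt; intro H3. assert (r^2 <= (p1 * cos s + p2 * sin s)^2)%R.
      { apply pow_incr; lra. } lra. }
    replace ((r * cos s - p1) * cos s + (r * sin s - p2) * sin s)%R with
      (r * (sin s * sin s + cos s * cos s) - (p1 * cos s + p2 * sin s))%R by ring.
    rewrite E. lra. }
  assert (HN : forall s, (0 < X s ^ 2 + Y s ^ 2)%R).
  { intros s. pose proof (HA s). unfold A in *.
    destruct (Req_dec (X s) 0) as [E|E]. rewrite E in *. assert (Y s <> 0)%R by (intro; subst; nra). nra. nra. }
  set (F := fun s => (ln (X s ^ 2 + Y s ^ 2) / 2, s + atan (B s / A s))%R).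
  eapply CI_val. apply (CI_FTC _ _ _ F).
  - intros t. split.
    + apply (Rder_ext (fun s => ln (X s ^ 2 + Y s ^ 2) / 2)%R). intros; reflexivity.
      pose proof (HN t) as HNt. unfold X, Y in *. auto_derive. lra.
      unfold circ, dcirc, Cinv, Cmult, Cminus, Cplus, Copp, RtoC. cbn [fst snd].
      replace (c1 + (r * cos t - 0 * sin t) + - a1)%R with (r * cos t - p1)%R by (unfold p1; ring).
      replace (c2 + (r * sin t + 0 * cos t) + - a2)%R with (r * sin t - p2)%R by (unfold p2; ring).
      field. lra.
    + apply (Rder_ext (fun s => s + atan (B s / A s))%R). intros; reflexivity.
      pose proof (HN t) as HNt. pose proof (HA t) as HAt. unfold B, A, X, Y in *. auto_derive. lra.
      unfold circ, dcirc, Cinv, Cmult, Cminus, Cplus, Copp, RtoC. cbn [fst snd].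
      replace (c1 + (r * cos t - 0 * sin t) + - a1)%R with (r * cos t - p1)%R by (unfold p1; ring).
      replace (c2 + (r * sin t + 0 * cos t) + - a2)%R with (r * sin t - p2)%R by (unfold p2; ring).
      field. split; [lra | split; [lra|]].
      assert (L : forall x y, (0 < x -> x*x + y*y <> 0)%R) by (intros; nra). apply L. lra.
  - intros t. apply CDx_mult. apply CDx_inv. apply CDx_minus. apply CDx_circ. apply CDx_const.
    apply circ_neq; auto. apply CDx_dcirc.
  - unfold F, A, B, X, Y. rewrite cos_2PI, sin_2PI, cos_0, sin_0.
    unfold Cminus, Cplus, Copp; cbn [fst snd]. f_equal; ring.
Qed.

Lemma CI_zero c r : CI c r (fun _ => 0%C) 0%C.
Proof.
  eapply CI_val. apply (CI_FTC _ _ _ (fun _ => 0%C)).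
  - intros t. eapply CD_eq. apply CD_const. apply Ceq. ring.
  - intros t. apply CDx_mult. apply CDx_const. apply CDx_dcirc.
  - apply Ceq; ring.
Qed.

Fixpoint Csum (f : nat -> C) (n : nat) : C :=
  match n with O => 0%C | S n' => (Csum f n' + f n')%C end.
Fixpoint rsum (f : nat -> R) (n : nat) : R :=
  match n with O => 0%R | S n' => (rsum f n' + f n')%R end.

Lemma RtoC_rsum f n : RtoC (rsum f n) = Csum (fun k => RtoC (f k)) n.
Proof. induction n; simpl. reflexivity. rewrite RtoC_plus, IHn. reflexivity. Qed.

Lemma CI_sum c r (f : nat -> C -> C) (v : nat -> C) n :
  (forall k, (k < n)%nat -> CI c r (f k) (v k)) ->
  CI c r (fun u => Csum (fun k => f k u) n) (Csum v n).
Proof.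
  induction n; intros H; simpl.
  - apply CI_zero.
  - apply CI_plus. apply IHn; intros; apply H; lia. apply H; lia.
Qed.

Inductive ispoly : (C -> C) -> Prop :=
| pconst k : ispoly (fun _ => k)
| pplus f g : ispoly f -> ispoly g -> ispoly (fun u => f u + g u)%C
| pscal k f : ispoly f -> ispoly (fun u => k * f u)%C
| pX f : ispoly f -> ispoly (fun u => u * f u)%C.

Lemma ispoly_ext f g : (forall u, f u = g u) -> ispoly f -> ispoly g.
Proof. intros H; replace g with f; auto. apply functional_extensionality; auto. Qed.

Lemma poly_CI_aux c r f : (0 <= r)%R -> ispoly f -> forall n, CI c r (fun u => Cpow u n * f u)%C 0%C.
Proof.
  intros Hr H; induction H; intros n.
  - eapply CI_val. eapply CI_ext; [auto| |apply (CI_scal _ _ _ _ k (CI_pow c r 0%C n))].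
    intros u _; cbv beta. apply Ceq. replace (u - 0)%C with u by ring. ring. apply Ceq; ring.
  - eapply CI_val. eapply CI_ext; [auto| |apply (CI_plus _ _ _ _ _ _ (IHispoly1 n) (IHispoly2 n))].
    intros u _; cbv beta. apply Ceq. ring. apply Ceq; ring.
  - eapply CI_val. eapply CI_ext; [auto| |apply (CI_scal _ _ _ _ k (IHispoly n))].
    intros u _; cbv beta. apply Ceq. ring. apply Ceq; ring.
  - eapply CI_ext; [auto| |apply (IHispoly (S n))].
    intros u _; cbv beta. apply Ceq. simpl. ring.
Qed.

Lemma poly_CI c r f : (0 <= r)%R -> ispoly f -> CI c r f 0%C.
Proof.
  intros Hr H. eapply CI_ext; [auto| |apply (poly_CI_aux c r f Hr H 0)].
  intros; simpl. apply Ceq; ring.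
Qed.

Lemma poly_div f : ispoly f -> forall x, exists g, ispoly g /\ forall u, (f u - f x = (u - x) * g u)%C.
Proof.
  intros H x; induction H.
  - exists (fun _ => 0%C); split. constructor. intros; apply Ceq; ring.
  - destruct IHispoly1 as [g1 [P1 E1]], IHispoly2 as [g2 [P2 E2]].
    exists (fun u => g1 u + g2 u)%C; split. constructor; auto.
    intros u. apply Ceq. rewrite Cmult_plus_distr_l, <- E1, <- E2. ring.
  - destruct IHispoly as [g1 [P1 E1]].
    exists (fun u => k * g1 u)%C; split. constructor; auto.
    intros u. apply Ceq. replace ((u - x) * (k * g1 u))%C with (k * ((u - x) * g1 u))%C by ring.
    rewrite <- E1. ring.
  - destruct IHispoly as [g1 [P1 E1]].
    exists (fun u => f u + x * g1 u)%C; split. constructor; auto. constructor. auto.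
    intros u. apply Ceq. replace ((u - x) * (f u + x * g1 u))%C with ((u - x) * f u + x * ((u - x) * g1 u))%C by ring.
    rewrite <- E1. ring.
Qed.

Definition tpi : C := (0%R, (2 * PI)%R).

Lemma circ_ne_in c r x u : (Cmod (x - c) < r)%R -> Cmod (u - c) = r -> (u - x)%C <> 0%C.
Proof.
  intros H1 H2 E. assert (u = x). { replace u with (u - x + x)%C by ring. rewrite E. ring. }
  subst. lra.
Qed.

Lemma Int0 c r f x : ispoly f -> (Cmod (x - c) < r)%R ->
  CI c r (fun u => f u / (x - u))%C (- tpi * f x)%C.
Proof.
  intros Hf Hx. assert (Hr : (0 <= r)%R) by (pose proof (Cmod_ge_0 (x - c)); lra).
  destruct (poly_div f Hf x) as [g [Pg Eg]].
  eapply CI_val. eapply CI_ext; [auto| |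
    apply (CI_minus _ _ _ _ _ _ (CI_scal _ _ _ _ (- f x)%C (CI_inv c r x Hx)) (poly_CI c r g Hr Pg))].
  - intros u Hu; cbv beta. apply Ceq. pose proof (circ_ne_in c r x u Hx Hu) as Hne.
    replace (f u) with (f x + (u - x) * g u)%C by (rewrite <- Eg; ring).
    field. split; auto. intro E; apply Hne. replace (u - x)%C with (- (x - u))%C by ring. rewrite E. ring.
  - unfold tpi. apply Ceq; ring.
Qed.

Lemma Kint c r x : (Cmod (x - c) < r)%R -> (Cmod (1 - c) < r)%R -> x <> 1%C ->
  forall m, CI c r (fun u => / Cpow (u - 1) (S m) / (x - u))%C 0%C.
Proof.
  intros Hx H1 Hx1. assert (Hr : (0 <= r)%R) by (pose proof (Cmod_ge_0 (x - c)); lra).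
  assert (Hx1' : (x - 1)%C <> 0%C).
  { intro E; apply Hx1. replace x with (x - 1 + 1)%C by ring. rewrite E; ring. }
  induction m.
  - eapply CI_val. eapply CI_ext; [auto| |
      apply (CI_scal _ _ _ _ (/ (x - 1))%C (CI_minus _ _ _ _ _ _ (CI_inv c r 1 H1) (CI_inv c r x Hx)))].
    + intros u Hu; cbv beta. apply Ceq.
      pose proof (circ_ne_in c r x u Hx Hu) as N1. pose proof (circ_ne_in c r 1 u H1 Hu) as N2.
      change (Cpow (u - 1) 1) with ((u - 1) * 1)%C.
      assert ((x - u)%C <> 0%C).
      { intro E; apply N1. replace (u - x)%C with (- (x - u))%C by ring. rewrite E. ring. }
      field. auto.
    + apply Ceq. field. auto.
  - eapply CI_val. eapply CI_ext; [auto| |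
      apply (CI_scal _ _ _ _ (/ (x - 1))%C (CI_plus _ _ _ _ _ _ (CI_negpow c r 1 m H1) IHm))].
    + intros u Hu; cbv beta. apply Ceq.
      pose proof (circ_ne_in c r x u Hx Hu) as N1. pose proof (circ_ne_in c r 1 u H1 Hu) as N2.
      assert ((x - u)%C <> 0%C).
      { intro E; apply N1. replace (u - x)%C with (- (x - u))%C by ring. rewrite E. ring. }
      pose proof (Cpow_nz _ m N2).
      change (Cpow (u - 1) (S (S m))) with ((u - 1) * ((u - 1) * Cpow (u - 1) m))%C.
      change (Cpow (u - 1) (S m)) with ((u - 1) * Cpow (u - 1) m)%C.
      field. auto.
    + apply Ceq. field. auto.
Qed.

Lemma Jpair_fst a s z : fst (Jpair a (S s) z) = snd (Jpair a s z).
Proof. simpl. destruct (Jpair a s z); reflexivity. Qed.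

Lemma J0 a z : J a 0 z = 1%C.
Proof. reflexivity. Qed.
Lemma J1m z : J mhalf 1 z = z.
Proof. reflexivity. Qed.
Lemma J1p z : J phalf 1 z = (2 * z + 1)%C.
Proof. reflexivity. Qed.
Lemma Jrec a s z : J a (S (S s)) z = (2 * z * J a (S s) z - J a s z)%C.
Proof.
  unfold J. rewrite Jpair_fst. simpl. destruct (Jpair a s z) as [p q]. reflexivity.
Qed.

Lemma rec_zero (z : C) (e : nat -> C) : e 0%nat = 0%C -> e 1%nat = 0%C ->
  (forall s, e (S (S s)) = (2 * z * e (S s) - e s)%C) -> forall s, e s = 0%C.
Proof.
  intros H0 H1 HS.
  assert (forall s, e s = 0%C /\ e (S s) = 0%C).
  { induction s. auto. destruct IHs as [A B]. split; auto. rewrite HS, A, B. apply Ceq; ring. }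
  intros s; apply H.
Qed.

Lemma JV_diff s z : (J phalf (S s) z - J phalf s z = 2 * J mhalf (S s) z)%C.
Proof.
  pose (e := fun s => (J phalf (S s) z - J phalf s z - 2 * J mhalf (S s) z)%C).
  assert (H : e s = 0%C).
  { apply (rec_zero z).
    - unfold e. rewrite J1p, J1m, J0. apply Ceq; ring.
    - unfold e. rewrite !Jrec, J1p, J1m, !J0. apply Ceq; ring.
    - intros s'. unfold e. rewrite !(Jrec _ (S s')), !(Jrec _ s'). apply Ceq; ring. }
  unfold e in H. apply Ceq. rewrite <- (Cplus_0_r (2 * J mhalf (S s) z)), <- H. ring.
Qed.

Lemma TV_diff s z : (J mhalf (S s) z - J mhalf s z = (z - 1) * J phalf s z)%C.
Proof.
  pose (e := fun s => (J mhalf (S s) z - J mhalf s z - (z - 1) * J phalf s z)%C).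
  assert (H : e s = 0%C).
  { apply (rec_zero z).
    - unfold e. rewrite J1m, !J0. apply Ceq; ring.
    - unfold e. rewrite !Jrec, J1p, J1m, !J0. apply Ceq; ring.
    - intros s'. unfold e. rewrite !(Jrec _ (S s')), !(Jrec _ s'). apply Ceq; ring. }
  unfold e in H. apply Ceq. rewrite <- (Cplus_0_r ((z - 1) * J phalf s z)), <- H. ring.
Qed.

Lemma Csum_ext f g n : (forall k, (k < n)%nat -> f k = g k) -> Csum f n = Csum g n.
Proof.
  induction n; intros H; simpl; auto. rewrite IHn, H; auto; intros; apply H; lia.
Qed.

Lemma Tm_le s k : (k <= s)%nat -> Tm s k = if Nat.eqb k 0 then 1%R else 2%R.
Proof.
  intros H. unfold Tm. destruct (Nat.ltb s k) eqn:E. apply Nat.ltb_lt in E; lia. reflexivity.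
Qed.

Lemma V_expand s z : J phalf s z = Csum (fun k => RtoC (Tm s k) * J mhalf k z)%C (S s).
Proof.
  induction s.
  - simpl. unfold Tm; simpl. rewrite !J0. apply Ceq; ring.
  - change (Csum (fun k => RtoC (Tm (S s) k) * J mhalf k z)%C (S (S s))) with
      (Csum (fun k => RtoC (Tm (S s) k) * J mhalf k z)%C (S s) + RtoC (Tm (S s) (S s)) * J mhalf (S s) z)%C.
    rewrite (Csum_ext _ (fun k => RtoC (Tm s k) * J mhalf k z)%C).
    + rewrite <- IHs. rewrite Tm_le by lia. simpl Nat.eqb. cbv iota.
      apply Ceq. rewrite <- JV_diff. ring.
    + intros k Hk. rewrite !Tm_le by lia. reflexivity.
Qed.

Lemma T_expand s z : J mhalf s z = (1 + (z - 1) * Csum (fun k => J phalf k z) s)%C.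
Proof.
  induction s.
  - simpl. rewrite J0. apply Ceq; ring.
  - simpl. apply Ceq. rewrite Cmult_plus_distr_l, Cplus_assoc, <- IHs, <- TV_diff. ring.
Qed.

Lemma J_poly a s : ispoly (J a s).
Proof.
  revert s. assert (H : forall s, ispoly (J a s) /\ ispoly (J a (S s))).
  { intros s; induction s.
    - split. apply (ispoly_ext (fun _ => 1%C)). intros; reflexivity. constructor.
      destruct a.
      + apply (ispoly_ext (fun u => u * 1)%C). intros; simpl; unfold J; simpl. apply Ceq; ring.
        apply pX; apply pconst.
      + apply (ispoly_ext (fun u => u * 2 + 1)%C). intros; unfold J; simpl. apply Ceq; ring.
        apply pplus; [apply pX; apply pconst | apply pconst].
    - destruct IHs as [A B]. split; auto.
      apply (ispoly_ext (fun u => u * (2 * J a (S s) u) + (- (1)) * J a s u)%C).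
      intros; rewrite Jrec. apply Ceq; ring.
      apply pplus; [apply pX; apply pscal; exact B | apply pscal; exact A]. }
  intros s; apply H.
Qed.

Definition Jr (a : half) (s : nat) (x : R) : R := fst (J a s (RtoC x)).

Lemma J_real a s x : J a s (RtoC x) = RtoC (Jr a s x).
Proof.
  unfold Jr. revert s.
  assert (H : forall s, snd (J a s (RtoC x)) = 0%R /\ snd (J a (S s) (RtoC x)) = 0%R).
  { intros s; induction s.
    - split. reflexivity. destruct a; simpl; ring.
    - destruct IHs as [A B]. split; auto. rewrite Jrec.
      destruct (J a (S s) (RtoC x)) as [q1 q2], (J a s (RtoC x)) as [p1 p2]; simpl in *.
      subst. ring. }
  intros s. destruct (H s) as [A _]. destruct (J a s (RtoC x)) as [p1 p2]; simpl in *. subst. reflexivity.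
Qed.

Lemma Csum_mult_r f n k : (Csum f n * k)%C = Csum (fun i => f i * k)%C n.
Proof. induction n; simpl. apply Ceq; ring. rewrite <- IHn. apply Ceq; ring. Qed.
Lemma Csum_mult_l f n k : (k * Csum f n)%C = Csum (fun i => k * f i)%C n.
Proof. induction n; simpl. apply Ceq; ring. rewrite <- IHn. apply Ceq; ring. Qed.

Definition FVof (ft : nat -> R -> R) (s : nat) (x : R) : R :=
  rsum (fun k => Tm s k * ft k x)%R (S s).
Fixpoint FT (m : nat) : nat -> R -> R :=
  match m with
  | O => fun s x => Jr mhalf s x
  | S m' => fun s x => rsum (fun k => FVof (FT m') k x) s
  end.
Definition FV (m : nat) : nat -> R -> R := FVof (FT m).

Lemma Cinv_1 : (/ 1)%C = 1%C.
Proof. apply Ceq. field. Qed.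

Lemma IntTV c r x : (forall t, (-1 <= t <= 1)%R -> (Cmod (RtoC t - c) < r)%R) -> (-1 < x < 1)%R ->
  forall m,
  (forall s, CI c r (fun u => J mhalf s u * / Cpow (u - 1) m / (RtoC x - u))%C (- tpi * RtoC (FT m s x))%C) /\
  (forall s, CI c r (fun u => J phalf s u * / Cpow (u - 1) m / (RtoC x - u))%C (- tpi * RtoC (FV m s x))%C).
Proof.
  intros Hin Hx.
  assert (Hxin : (Cmod (RtoC x - c) < r)%R) by (apply Hin; lra).
  assert (H1in : (Cmod (1 - c) < r)%R) by (apply (Hin 1%R); lra).
  assert (Hr : (0 <= r)%R) by (pose proof (Cmod_ge_0 (1 - c)); lra).
  assert (Hx1 : RtoC x <> 1%C).
  { intro E. apply (f_equal fst) in E. simpl in E. lra. }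
  assert (Vstep : forall m, (forall s, CI c r (fun u => J mhalf s u * / Cpow (u - 1) m / (RtoC x - u))%C (- tpi * RtoC (FT m s x))%C) ->
     (forall s, CI c r (fun u => J phalf s u * / Cpow (u - 1) m / (RtoC x - u))%C (- tpi * RtoC (FV m s x))%C)).
  { intros m HT s.
    eapply CI_val. eapply CI_ext; [auto| |
      apply (CI_sum c r (fun k u => RtoC (Tm s k) * (J mhalf k u * / Cpow (u - 1) m / (RtoC x - u)))%C
               (fun k => RtoC (Tm s k) * (- tpi * RtoC (FT m k x)))%C (S s))].
    + intros u _. cbv beta. rewrite V_expand. unfold Cdiv. rewrite !Csum_mult_r. apply Csum_ext.
      intros; apply Ceq; ring.
    + intros k _. apply CI_scal. apply HT.
    + unfold FV, FVof; cbv beta. rewrite RtoC_rsum, Csum_mult_l. apply Csum_ext. intros.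
      rewrite RtoC_mult. apply Ceq; ring. }
  induction m.
  - assert (HT : forall s, CI c r (fun u => J mhalf s u * / Cpow (u - 1) 0 / (RtoC x - u))%C (- tpi * RtoC (FT 0 s x))%C).
    { intros s. eapply CI_val. eapply CI_ext; [auto| | apply (Int0 c r (J mhalf s) (RtoC x) (J_poly _ _) Hxin)].
      + intros u _. cbv beta. simpl Cpow. rewrite Cinv_1. apply Ceq; unfold Cdiv; ring.
      + simpl FT. rewrite J_real. reflexivity. }
    split; auto.
  - destruct IHm as [IT IV].
    assert (HT : forall s, CI c r (fun u => J mhalf s u * / Cpow (u - 1) (S m) / (RtoC x - u))%C (- tpi * RtoC (FT (S m) s x))%C).
    { intros s. eapply CI_val. eapply CI_ext; [auto| |
        apply (CI_plus _ _ _ _ _ _ (Kint c r (RtoC x) Hxin H1in Hx1 m)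
                 (CI_sum c r (fun k u => J phalf k u * / Cpow (u - 1) m / (RtoC x - u))%C
                    (fun k => - tpi * RtoC (FV m k x))%C s (fun k _ => IV k)))].
      + intros u Hu. cbv beta. rewrite T_expand.
        pose proof (circ_ne_in c r (RtoC x) u Hxin Hu) as N1. pose proof (circ_ne_in c r 1 u H1in Hu) as N2.
        assert ((RtoC x - u)%C <> 0%C).
        { intro E; apply N1. replace (u - RtoC x)%C with (- (RtoC x - u))%C by ring. rewrite E. ring. }
        pose proof (Cpow_nz _ m N2).
        rewrite <- (Csum_ext (fun k => J phalf k u * (/ Cpow (u - 1) m / (RtoC x - u)))%C).
        2:{ intros; apply Ceq; unfold Cdiv; ring. }
        rewrite <- Csum_mult_r.
        change (Cpow (u - 1) (S m)) with ((u - 1) * Cpow (u - 1) m)%C.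
        apply Ceq. field. auto.
      + simpl FT. rewrite RtoC_rsum, Csum_mult_l. apply Ceq. rewrite Cplus_0_l. f_equal. }
    split; auto.
Qed.

Lemma rsum_ext f g n : (forall k, (k < n)%nat -> f k = g k) -> rsum f n = rsum g n.
Proof. induction n; intros H; simpl; auto. rewrite IHn, H; auto; intros; apply H; lia. Qed.

Lemma sum_n_rsum (f : nat -> R) n : sum_n f n = rsum f (S n).
Proof.
  induction n. rewrite sum_O. simpl. ring.
  rewrite sum_Sn, IHn. simpl. reflexivity.
Qed.

Lemma rsum_zero_tail f N n : (forall z, (N <= z)%nat -> f z = 0%R) -> (N <= n)%nat -> rsum f n = rsum f N.
Proof.
  intros H Hn. induction Hn. auto. simpl. rewrite IHHn, H by lia. ring.
Qed.

Lemma Series_fin (f : nat -> R) N : (forall z, (N <= z)%nat -> f z = 0%R) -> Series f = rsum f N.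
Proof.
  intros H. apply is_series_unique.
  assert (L : is_lim_seq (sum_n f) (rsum f N)).
  { apply (is_lim_seq_ext_loc (fun _ => rsum f N)).
    exists N. intros n Hn. rewrite sum_n_rsum. symmetry. apply rsum_zero_tail; auto.
    apply is_lim_seq_const. }
  exact L.
Qed.

Definition LT (A : mat) : Prop := forall x z, (x < z)%nat -> A x z = 0%R.

Lemma mconv_fin A B x y n : LT A -> (x < n)%nat -> mconv A B x y = rsum (fun z => A x z * B z y)%R n.
Proof.
  intros HA Hn. unfold mconv. rewrite (Series_fin _ (S x)).
  symmetry. apply rsum_zero_tail; auto. intros z Hz. rewrite HA by lia. ring.
  intros z Hz. rewrite HA by lia. ring.
Qed.

Lemma LT_mconv A B : LT A -> LT B -> LT (mconv A B).
Proof.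
  intros HA HB x z Hxz. rewrite (mconv_fin _ _ _ _ (S x)) by (auto; lia).
  transitivity (rsum (fun _ => 0%R) (S x)).
  apply rsum_ext; intros k Hk. rewrite HB by lia. ring.
  clear. induction (S x); simpl; auto. rewrite IHn; ring.
Qed.

Lemma LT_mid : LT mid.
Proof. intros x z H. unfold mid. destruct (Nat.eqb x z) eqn:E; auto. apply Nat.eqb_eq in E; lia. Qed.
Lemma LT_Tm : LT Tm.
Proof. intros x z H. unfold Tm. apply Nat.ltb_lt in H. rewrite H. auto. Qed.
Lemma LT_phim : LT phim.
Proof. intros x z H. unfold phim. destruct (Nat.ltb z x) eqn:E; auto. apply Nat.ltb_lt in E; lia. Qed.
Lemma LT_mpow A k : LT A -> LT (mpow A k).
Proof. intros HA; induction k; simpl. apply LT_mid. apply LT_mconv; auto. Qed.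

Lemma rsum_plus f g n : rsum (fun k => f k + g k)%R n = (rsum f n + rsum g n)%R.
Proof. induction n; simpl. ring. rewrite IHn; ring. Qed.
Lemma rsum_scal f n a : rsum (fun k => a * f k)%R n = (a * rsum f n)%R.
Proof. induction n; simpl. ring. rewrite IHn; ring. Qed.
Lemma rsum_swap (g : nat -> nat -> R) n m :
  rsum (fun i => rsum (fun j => g i j) m) n = rsum (fun j => rsum (fun i => g i j) n) m.
Proof.
  induction n; simpl.
  - clear. induction m; simpl; auto. rewrite <- IHm; ring.
  - rewrite IHn. rewrite <- rsum_plus. reflexivity.
Qed.

Lemma exp_comp A B (Z : nat -> R) s n : LT A -> LT B -> (s < n)%nat ->
  rsum (fun k => A s k * rsum (fun j => B k j * Z j) n)%R n =
  rsum (fun j => mconv A B s j * Z j)%R n.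
Proof.
  intros HA HB Hn.
  rewrite (rsum_ext (fun j => mconv A B s j * Z j)%R (fun j => rsum (fun k => A s k * B k j * Z j)%R n)).
  2:{ intros j Hj. rewrite (mconv_fin _ _ _ _ n) by auto. rewrite Rmult_comm, <- rsum_scal.
      apply rsum_ext; intros; ring. }
  rewrite <- rsum_swap. apply rsum_ext; intros k Hk.
  rewrite <- rsum_scal. apply rsum_ext; intros; ring.
Qed.

Lemma mconv_assoc A B C x y : LT A -> LT B ->
  mconv (mconv A B) C x y = mconv A (mconv B C) x y.
Proof.
  intros HA HB. rewrite (mconv_fin _ _ _ _ (S x)) by (auto using LT_mconv).
  rewrite (mconv_fin _ _ _ _ (S x)) by auto.
  rewrite (rsum_ext (fun z => mconv A B x z * C z y)%R (fun z => rsum (fun k => A x k * B k z * C z y)%R (S x))).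
  2:{ intros z Hz. rewrite (mconv_fin _ _ _ _ (S x)) by auto. rewrite Rmult_comm, <- rsum_scal.
      apply rsum_ext; intros; ring. }
  rewrite <- rsum_swap. apply rsum_ext; intros k Hk.
  destruct (le_lt_dec k x) as [Hkx|Hkx]; [|lia].
  rewrite (mconv_fin _ _ _ _ (S x)) by (auto; lia).
  rewrite <- rsum_scal. apply rsum_ext; intros; ring.
Qed.

Lemma mconv_mid_l A x y : LT A -> mconv mid A x y = A x y.
Proof.
  intros HA. rewrite (mconv_fin _ _ _ _ (S x)) by (auto using LT_mid).
  simpl. rewrite (rsum_ext _ (fun _ => 0%R)).
  - unfold mid; rewrite Nat.eqb_refl. assert (rsum (fun _ => 0%R) x = 0%R) as ->.
    { clear. induction x; simpl; auto. rewrite IHx; ring. } ring.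
  - intros k Hk. unfold mid. destruct (Nat.eqb x k) eqn:E. apply Nat.eqb_eq in E; lia. ring.
Qed.

Lemma mconv_mid_r A x y : mconv A mid x y = A x y.
Proof.
  unfold mconv. rewrite (Series_fin _ (S y)).
  - simpl. rewrite (rsum_ext _ (fun _ => 0%R)).
    + unfold mid; rewrite Nat.eqb_refl. assert (rsum (fun _ => 0%R) y = 0%R) as ->.
      { clear. induction y; simpl; auto. rewrite IHy; ring. } ring.
    + intros k Hk. unfold mid. destruct (Nat.eqb k y) eqn:E. apply Nat.eqb_eq in E; lia. ring.
  - intros z Hz. unfold mid. destruct (Nat.eqb z y) eqn:E. apply Nat.eqb_eq in E; lia. ring.
Qed.

Lemma mpow_comm A k x y : LT A -> mconv A (mpow A k) x y = mpow A (S k) x y.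
Proof.
  intros HA. revert x y. induction k; intros x y.
  - simpl. rewrite mconv_mid_r, mconv_mid_l; auto.
  - change (mpow A (S (S k))) with (mconv (mpow A (S k)) A).
    change (mpow A (S k)) with (mconv (mpow A k) A) at 1.
    rewrite <- mconv_assoc by (auto using LT_mpow).
    unfold mconv at 1 3. apply Series_ext. intros n. f_equal. apply IHk.
Qed.

Lemma rsum_delta f s n : (s < n)%nat -> rsum (fun k => mid s k * f k)%R n = f s.
Proof.
  intros H. induction H; simpl.
  - rewrite (rsum_ext _ (fun _ => 0%R)). unfold mid; rewrite Nat.eqb_refl.
    assert (rsum (fun _ => 0%R) s = 0%R) as ->. { clear. induction s; simpl; auto. rewrite IHs; ring. } ring.
    intros k Hk. unfold mid. destruct (Nat.eqb s k) eqn:E. apply Nat.eqb_eq in E; lia. ring.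
  - rewrite IHle. unfold mid. destruct (Nat.eqb s m) eqn:E. apply Nat.eqb_eq in E; lia. ring.
Qed.

Lemma iter_exp (M : mat) (F : nat -> nat -> R) : LT M ->
  (forall m s n, (s < n)%nat -> F (S m) s = rsum (fun j => M s j * F m j)%R n) ->
  forall m p s n, (s < n)%nat -> F (m + p)%nat s = rsum (fun k => mpow M m s k * F p k)%R n.
Proof.
  intros HM HS m. induction m; intros p s n Hn.
  - simpl. rewrite rsum_delta; auto.
  - simpl (S m + p)%nat. rewrite (HS _ _ n Hn).
    rewrite (rsum_ext _ (fun j => M s j * rsum (fun k => mpow M m j k * F p k) n)%R).
    2:{ intros j Hj. rewrite (IHm p j n Hj). reflexivity. }
    rewrite exp_comp by (auto using LT_mpow).
    apply rsum_ext; intros k _. rewrite mpow_comm; auto.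
Qed.

Lemma FVof_fin ft s x n : (s < n)%nat -> FVof ft s x = rsum (fun k => Tm s k * ft k x)%R n.
Proof.
  intros H. unfold FVof. symmetry. apply rsum_zero_tail. intros; rewrite LT_Tm by lia; ring. lia.
Qed.

Lemma phim_sum (f : nat -> R) s n : (s <= n)%nat -> rsum f s = rsum (fun k => phim s k * f k)%R n.
Proof.
  intros H. rewrite (rsum_zero_tail (fun k => phim s k * f k)%R s n); auto.
  - apply rsum_ext; intros k Hk. unfold phim. replace (Nat.ltb k s) with true. ring.
    symmetry; apply Nat.ltb_lt; auto.
  - intros z Hz. unfold phim. replace (Nat.ltb z s) with false. ring.
    symmetry; apply Nat.ltb_ge; auto.
Qed.

Lemma StepT m s n x : (s < n)%nat -> FT (S m) s x = rsum (fun j => mconv phim Tm s j * FT m j x)%R n.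
Proof.
  intros H. simpl FT. rewrite (phim_sum _ s n) by lia.
  rewrite (rsum_ext _ (fun k => phim s k * rsum (fun j => Tm k j * FT m j x) n)%R).
  apply exp_comp; auto using LT_phim, LT_Tm.
  intros k Hk. rewrite (FVof_fin _ _ _ n); auto.
Qed.

Lemma StepV m s n x : (s < n)%nat -> FV (S m) s x = rsum (fun j => mconv Tm phim s j * FV m j x)%R n.
Proof.
  intros H. unfold FV at 1. rewrite (FVof_fin _ _ _ n H).
  rewrite (rsum_ext _ (fun k => Tm s k * rsum (fun j => phim k j * FV m j x) n)%R).
  apply exp_comp; auto using LT_phim, LT_Tm.
  intros k Hk. simpl FT. rewrite (phim_sum _ k n) by lia. reflexivity.
Qed.

Lemma Jr_V s x n : (s < n)%nat -> Jr phalf s x = rsum (fun k => Tm s k * Jr mhalf k x)%R n.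
Proof.
  intros H. apply RtoC_inj. rewrite <- J_real, V_expand.
  rewrite (rsum_zero_tail (fun k => Tm s k * Jr mhalf k x)%R (S s) n).
  rewrite RtoC_rsum. apply Csum_ext. intros k _. rewrite RtoC_mult, J_real. reflexivity.
  intros; rewrite LT_Tm by lia; ring. lia.
Qed.

Lemma FV0 s x : FV 0 s x = Jr phalf s x.
Proof. unfold FV, FVof. rewrite (Jr_V _ _ (S s)) by lia. reflexivity. Qed.

Lemma Exp4 m s x n : (s < n)%nat -> FT m s x = rsum (fun k => mpow (mconv phim Tm) m s k * Jr mhalf k x)%R n.
Proof.
  intros H. replace m with (m + 0)%nat at 1 by lia.
  apply (iter_exp (mconv phim Tm) (fun m s => FT m s x)); auto.
  apply LT_mconv; auto using LT_phim, LT_Tm. intros; apply StepT; auto.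
Qed.

Lemma Exp2 m s x n : (s < n)%nat -> FV m s x = rsum (fun k => mpow (mconv Tm phim) m s k * Jr phalf k x)%R n.
Proof.
  intros H. replace m with (m + 0)%nat at 1 by lia.
  rewrite (iter_exp (mconv Tm phim) (fun m s => FV m s x)) with (n := n); auto.
  apply rsum_ext; intros; rewrite FV0; reflexivity.
  apply LT_mconv; auto using LT_phim, LT_Tm. intros; apply StepV; auto.
Qed.

Lemma Exp1 m s x n : (s < n)%nat -> FV m s x = rsum (fun k => mconv (mpow (mconv Tm phim) m) Tm s k * Jr mhalf k x)%R n.
Proof.
  intros H. rewrite (Exp2 m s x n H). rewrite <- exp_comp; auto.
  apply rsum_ext; intros k Hk. rewrite (Jr_V k x n Hk). reflexivity.
  apply LT_mpow, LT_mconv; auto using LT_phim, LT_Tm. apply LT_Tm.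
Qed.

Lemma Exp3 m s x n : (s < n)%nat -> FT (S m) s x = rsum (fun k => mconv (mpow (mconv phim Tm) m) phim s k * Jr phalf k x)%R n.
Proof.
  intros H. replace (S m) with (m + 1)%nat by lia.
  rewrite (iter_exp (mconv phim Tm) (fun m s => FT m s x)) with (n := n); auto.
  rewrite <- exp_comp; auto.
  apply rsum_ext; intros k Hk. simpl FT. rewrite (phim_sum _ k n) by lia.
  f_equal. apply rsum_ext; intros j _. rewrite <- FV0. reflexivity.
  apply LT_mpow, LT_mconv; auto using LT_phim, LT_Tm. apply LT_phim.
  apply LT_mconv; auto using LT_phim, LT_Tm. intros; apply StepT; auto.
Qed.

Lemma Req (a b : R) : a = b -> a = b.
Proof. auto. Qed.

Lemma acos_der x : (-1 < x < 1)%R -> is_derive acos x (-1 / sqrt (1 - x ^ 2))%R.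
Proof.
  intros H. apply is_derive_Reals.
  replace (x ^ 2)%R with (Rsqr x) by (unfold Rsqr; ring).
  apply (derive_pt_eq_1 acos x _ (derivable_pt_acos x H)).
  apply derive_pt_acos.
Qed.

Lemma sqrt_pos_int x : (-1 < x < 1)%R -> (0 < sqrt (1 - x ^ 2))%R.
Proof. intros H. apply sqrt_lt_R0. nra. Qed.

Lemma G_der (Psi dPsi : R -> R) x : (forall t, is_derive Psi t (dPsi t)) -> (-1 < x < 1)%R ->
  is_derive (fun y => - Psi (acos y))%R x (dPsi (acos x) / sqrt (1 - x ^ 2))%R.
Proof.
  intros HP Hx. pose proof (sqrt_pos_int x Hx).
  eapply is_derive_eq. apply Rder_opp.
  apply (is_derive_comp (K := R_AbsRing) (V := R_NormedModule) Psi acos). apply HP. apply acos_der; auto.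
  change (scal ?u ?v) with (u * v)%R. apply Req. field. lra.
Qed.

Lemma dG_cont (dPsi : R -> R) x : (forall t, ex_derive dPsi t) -> (-1 < x < 1)%R ->
  continuous (fun y => dPsi (acos y) / sqrt (1 - y ^ 2))%R x.
Proof.
  intros HP Hx. apply (ex_derive_continuous (K := R_AbsRing) (V := R_NormedModule)).
  pose proof (sqrt_pos_int x Hx).
  destruct (HP (acos x)) as [l Hl].
  eexists. unfold Rdiv. apply Rder_mult.
  apply (is_derive_comp (K := R_AbsRing) (V := R_NormedModule) dPsi acos). exact Hl. apply acos_der; auto.
  auto_derive. split. nra. split; [|auto].
  replace (1 + - (x * (x * 1)))%R with (1 - x ^ 2)%R by ring. lra. reflexivity.
Qed.

Lemma in_range a b x : (-1 < a < 1)%R -> (-1 < b < 1)%R -> (Rmin a b <= x <= Rmax a b)%R -> (-1 < x < 1)%R.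
Proof.
  intros Ha Hb H. unfold Rmin, Rmax in H. destruct (Rle_dec a b); lra.
Qed.

Lemma RInt_acos (Psi dPsi h : R -> R) a b :
  (forall t, is_derive Psi t (dPsi t)) -> (forall t, ex_derive dPsi t) ->
  (forall x, (-1 < x < 1)%R -> h x = dPsi (acos x) / sqrt (1 - x ^ 2))%R ->
  (-1 < a < 1)%R -> (-1 < b < 1)%R ->
  is_RInt h a b (Psi (acos a) - Psi (acos b))%R.
Proof.
  intros HP HdP Hh Ha Hb.
  assert (HI := is_RInt_derive (V := R_CompleteNormedModule)
         (fun y => - Psi (acos y))%R (fun y => dPsi (acos y) / sqrt (1 - y ^ 2))%R a b).
  replace (Psi (acos a) - Psi (acos b))%R with
    (@minus R_AbelianGroup (- Psi (acos b)) (- Psi (acos a)))%R.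
  2:{ unfold minus, plus, opp; simpl. ring. }
  eapply is_RInt_ext; [|apply HI].
  - intros x Hx. symmetry. apply Hh. apply (in_range a b x Ha Hb). lra.
  - intros x Hx. apply G_der; auto. apply (in_range a b x Ha Hb Hx).
  - intros x Hx. apply dG_cont; auto. apply (in_range a b x Ha Hb Hx).
Qed.

Lemma acos_small x e : (0 < e <= PI)%R -> (cos e < x)%R -> (x <= 1)%R -> (0 <= acos x < e)%R.
Proof.
  intros He Hx Hx1. pose proof (acos_bound x) as [A B]. split; auto.
  destruct (Rlt_le_dec (acos x) e) as [H|H]; auto.
  assert (Hc : (-1 <= x <= 1)%R).
  { split; auto. pose proof (COS_bound e); lra. }
  destruct (Req_dec (acos x) e) as [E|E].
  - rewrite <- E, cos_acos in Hx; auto. lra.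
  - assert (cos (acos x) < cos e)%R by (apply cos_decreasing_1; lra).
    rewrite cos_acos in H0; auto. lra.
Qed.

Lemma acos_lim1 : filterlim acos (at_left 1) (locally 0%R).
Proof.
  apply filterlim_locally. intros eps.
  set (e' := Rmin eps (PI / 2)).
  assert (He' : (0 < e' <= PI)%R).
  { unfold e'. pose proof PI_RGT_0. pose proof (cond_pos eps). unfold Rmin; destruct (Rle_dec eps (PI/2)); lra. }
  assert (Hc : (cos e' < 1)%R).
  { rewrite <- cos_0. apply cos_decreasing_1; lra. }
  assert (Hd : (0 < 1 - cos e')%R) by lra.
  exists (mkposreal _ Hd). intros y Hy Hy1. simpl in Hy.
  unfold ball in Hy; simpl in Hy; unfold AbsRing_ball, abs, minus, plus, opp in Hy; simpl in Hy.
  unfold ball; simpl; unfold AbsRing_ball, abs, minus, plus, opp; simpl.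
  apply Rabs_def2 in Hy.
  assert (H := acos_small y e' He' ltac:(lra) ltac:(lra)).
  rewrite Rabs_right by lra. assert (e' <= eps)%R by (unfold e'; apply Rmin_l). lra.
Qed.

Lemma acos_limm1 : filterlim acos (at_right (-1)) (locally PI).
Proof.
  apply filterlim_locally. intros eps.
  set (e' := Rmin eps (PI / 2)).
  assert (He' : (0 < e' <= PI)%R).
  { unfold e'. pose proof PI_RGT_0. pose proof (cond_pos eps). unfold Rmin; destruct (Rle_dec eps (PI/2)); lra. }
  assert (Hc : (cos e' < 1)%R).
  { rewrite <- cos_0. apply cos_decreasing_1; lra. }
  assert (Hd : (0 < 1 - cos e')%R) by lra.
  exists (mkposreal _ Hd). intros y Hy Hy1. simpl in Hy.
  unfold ball in Hy; simpl in Hy; unfold AbsRing_ball, abs, minus, plus, opp in Hy; simpl in Hy.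
  unfold ball; simpl; unfold AbsRing_ball, abs, minus, plus, opp; simpl.
  apply Rabs_def2 in Hy.
  assert (H := acos_small (- y) e' He' ltac:(lra) ltac:(lra)).
  rewrite acos_opp in H.
  rewrite Rabs_left1 by lra. assert (e' <= eps)%R by (unfold e'; apply Rmin_l). lra.
Qed.

Lemma is_RInt_val {V : NormedModule R_AbsRing} (f : R -> V) a b v v' : is_RInt f a b v -> v = v' -> is_RInt f a b v'.
Proof. intros H ->; auto. Qed.

Lemma is_RInt_RtoC (h : R -> R) a b v : is_RInt h a b v ->
  @is_RInt C_R_NormedModule (fun x => RtoC (h x)) a b (RtoC v).
Proof.
  intros H. apply (is_RInt_fct_extend_pair (U := R_NormedModule) (V := R_NormedModule)); simpl.
  - exact H.
  - eapply is_RInt_val. apply (is_RInt_const (V := R_NormedModule) a b 0%R).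
    change (scal (b - a) 0%R) with ((b - a) * 0)%R. apply Req. ring.
Qed.

Lemma contKR (K : C) y0 : filterlim (fun y : R => (K * RtoC y)%C) (locally y0) (locally (K * RtoC y0)%C).
Proof.
  assert (H : continuous (fun y : R => @scal R_Ring C_R_ModuleSpace y K) y0).
  { apply (ex_derive_continuous (K := R_AbsRing) (V := C_R_NormedModule)).
    exists (scal 1%R K). apply (is_derive_scal_l (K := R_AbsRing) (V := C_R_NormedModule) (fun y => y)).
    apply (is_derive_id (K := R_AbsRing)). }
  assert (E : forall y : R, @scal R_Ring C_R_ModuleSpace y K = (K * RtoC y)%C).
  { intros y. destruct K. unfold scal; simpl. unfold prod_scal; simpl. unfold RtoC, Cmult; simpl.
    unfold mult; simpl. change (scal y ?u) with (y * u)%R. f_equal; apply Req; ring. }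
  unfold continuous in H. rewrite E in H.
  eapply filterlim_ext; [|exact H]. intros; apply E.
Qed.

Lemma gen_acos (Psi dPsi h : R -> R) (K : C) :
  (forall t, is_derive Psi t (dPsi t)) -> (forall t, ex_derive dPsi t) ->
  (forall x, (-1 < x < 1)%R -> h x = dPsi (acos x) / sqrt (1 - x ^ 2))%R ->
  @is_RInt_gen C_R_NormedModule (fun x => K * RtoC (h x))%C (at_right (-1)) (at_left 1)
    (K * RtoC (Psi PI - Psi 0))%C.
Proof.
  intros HP HdP Hh.
  set (L := fun y => (K * RtoC (Psi (acos y)))%C).
  assert (Hint : forall a b, (-1 < a < 1)%R -> (-1 < b < 1)%R ->
     @is_RInt C_R_NormedModule (fun x => K * RtoC (h x))%C a b (plus (L a) (opp (L b)))).
  { intros a b Ha Hb. eapply is_RInt_val. apply is_RInt_Cscal. apply is_RInt_RtoC.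
    apply (RInt_acos Psi dPsi h a b HP HdP Hh Ha Hb).
    unfold L. change (plus ?u ?v) with (Cplus u v). change (opp ?u) with (Copp u).
    rewrite RtoC_minus. apply Ceq; ring. }
  assert (HcP : forall p, filterlim Psi (locally p) (locally (Psi p))).
  { intros p. apply (ex_derive_continuous (K := R_AbsRing) (V := R_NormedModule)). eexists; apply HP. }
  assert (LA : filterlim L (at_right (-1)) (locally (K * RtoC (Psi PI))%C)).
  { unfold L. apply (filterlim_comp _ _ _ (fun y => Psi (acos y)) (fun v => K * RtoC v)%C _ (locally (Psi PI))).
    apply (filterlim_comp _ _ _ acos Psi _ (locally PI)). apply acos_limm1. apply HcP. apply contKR. }
  assert (LB : filterlim L (at_left 1) (locally (K * RtoC (Psi 0))%C)).
  { unfold L. apply (filterlim_comp _ _ _ (fun y => Psi (acos y)) (fun v => K * RtoC v)%C _ (locally (Psi 0))).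
    apply (filterlim_comp _ _ _ acos Psi _ (locally 0%R)). apply acos_lim1. apply HcP. apply contKR. }
  assert (Lim : filterlim (fun ab : R * R => plus (L (fst ab)) (opp (L (snd ab))))
      (filter_prod (at_right (-1)) (at_left 1))
      (locally (plus (K * RtoC (Psi PI))%C (opp (K * RtoC (Psi 0))%C)))).
  { apply (filterlim_comp_2 (G := locally (K * RtoC (Psi PI))%C) (H := locally (opp (K * RtoC (Psi 0))%C))
      (fun ab : R * R => L (fst ab)) (fun ab => opp (L (snd ab))) plus).
    - apply (filterlim_comp _ _ _ fst L _ (at_right (-1))). apply filterlim_fst. exact LA.
    - apply (filterlim_comp _ _ _ snd (fun b => opp (L b)) _ (at_left 1)). apply filterlim_snd.
      apply (filterlim_comp _ _ _ L opp _ (locally (K * RtoC (Psi 0))%C)). exact LB.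
      apply (filterlim_opp (V := C_R_NormedModule)).
    - apply (filterlim_plus (V := C_R_NormedModule)). }
  replace (K * RtoC (Psi PI - Psi 0))%C with (plus (K * RtoC (Psi PI))%C (opp (K * RtoC (Psi 0))%C)).
  2:{ change (plus ?u ?v) with (Cplus u v). change (opp ?u) with (Copp u). rewrite RtoC_minus. apply Ceq; ring. }
  intros P HPl. unfold filtermapi.
  assert (HR : filter_prod (at_right (-1)) (at_left 1) (fun ab : R * R => (-1 < fst ab < 1)%R /\ (-1 < snd ab < 1)%R)).
  { apply (Filter_prod _ _ _ (fun a => (-1 < a < 1)%R) (fun b => (-1 < b < 1)%R)).
    - assert (H1 : (0 < 1)%R) by lra. exists (mkposreal _ H1). intros y Hy Hy1. simpl in Hy.
      unfold ball in Hy; simpl in Hy; unfold AbsRing_ball, abs, minus, plus, opp in Hy; simpl in Hy.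
      apply Rabs_def2 in Hy. lra.
    - assert (H1 : (0 < 1)%R) by lra. exists (mkposreal _ H1). intros y Hy Hy1. simpl in Hy.
      unfold ball in Hy; simpl in Hy; unfold AbsRing_ball, abs, minus, plus, opp in Hy; simpl in Hy.
      apply Rabs_def2 in Hy. lra.
    - intros; simpl; auto. }
  assert (H2 := Lim P HPl). unfold filtermap in H2.
  generalize (filter_and _ _ HR H2). apply filter_imp.
  intros [a b] [[Ha Hb] HPab]. simpl in *. exists (plus (L a) (opp (L b))). split; auto.
Qed.

Definition Sfun (d t : R) : R := if Req_EM_T d 0 then t else (sin (d * t) / d)%R.

Lemma Sfun_der d t : is_derive (Sfun d) t (cos (d * t)).
Proof.
  unfold Sfun. destruct (Req_EM_T d 0) as [E|E].
  - subst. eapply is_derive_eq. apply (is_derive_id (K := R_AbsRing)). rewrite Rmult_0_l, cos_0. reflexivity.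
  - auto_derive; auto. field; auto.
Qed.

Lemma cos_ex_derive d t : ex_derive (fun t => cos (d * t)) t.
Proof. auto_derive; auto. Qed.

Lemma Sfun_0 d : Sfun d 0 = 0%R.
Proof. unfold Sfun. destruct (Req_EM_T d 0). auto. rewrite Rmult_0_r, sin_0. unfold Rdiv; ring. Qed.

Lemma Sfun_PI (z : Z) : Sfun (IZR z) PI = if Z.eqb z 0 then PI else 0%R.
Proof.
  unfold Sfun. destruct (Req_EM_T (IZR z) 0) as [E|E]; destruct (Z.eqb z 0) eqn:Ez.
  - auto.
  - apply eq_IZR_R0 in E. apply Z.eqb_neq in Ez. lia.
  - apply Z.eqb_eq in Ez. subst. simpl in E. lra.
  - rewrite sin_eq_0_1. unfold Rdiv; ring. exists z; reflexivity.
Qed.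

Definition Phi (a : half) (j k : nat) (t : R) : R :=
  match a with
  | mhalf => ((Sfun (INR j - INR k) t + Sfun (INR j + INR k) t) / 2)%R
  | phalf => (Sfun (INR j - INR k) t - Sfun (INR j + INR k + 1) t)%R
  end.
Definition dPhi (a : half) (j k : nat) (t : R) : R :=
  match a with
  | mhalf => ((cos ((INR j - INR k) * t) + cos ((INR j + INR k) * t)) / 2)%R
  | phalf => (cos ((INR j - INR k) * t) - cos ((INR j + INR k + 1) * t))%R
  end.

Lemma Phi_der a j k t : is_derive (Phi a j k) t (dPhi a j k t).
Proof.
  destruct a; simpl.
  - eapply is_derive_eq. apply (Rder_ext (fun t => (Sfun (INR j - INR k) t + Sfun (INR j + INR k) t) * / 2)%R).
    intros; unfold Rdiv; reflexivity.
    apply Rder_mult. apply Rder_plus; apply Sfun_der. apply Rder_const. apply Req. unfold Rdiv; ring.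
  - apply Rder_minus; apply Sfun_der.
Qed.

Lemma dPhi_ex a j k (t : R) : ex_derive (dPhi a j k) t.
Proof. destruct a; unfold dPhi; auto_derive; auto. Qed.

Definition wgt (a : half) (x : R) : R :=
  (Rpower (1 - x) (aval a) * Rpower (1 + x) (- (1 / 2)))%R.

Lemma Rpower_half y : (0 < y)%R -> Rpower y (1 / 2) = sqrt y.
Proof. intros H. replace (1 / 2)%R with (/ 2)%R by field. apply Rpower_sqrt; auto. Qed.

Lemma Rpower_mhalf y : (0 < y)%R -> Rpower y (- (1 / 2)) = (/ sqrt y)%R.
Proof. intros H. rewrite Rpower_Ropp, Rpower_half; auto. Qed.

Lemma Jr_m j x : (-1 < x < 1)%R -> Jr mhalf j x = cos (INR j * acos x).
Proof.
  intros H. unfold Jr. rewrite <- (cos_acos x) at 1 by lra. rewrite J_mhalf_cos. reflexivity.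
Qed.

Lemma Jr_p j x : (-1 < x < 1)%R -> Jr phalf j x = (sin ((INR j + 1/2) * acos x) / sin (acos x / 2))%R.
Proof.
  intros H. pose proof (acos_bound_lt x H).
  assert (sin (acos x / 2) <> 0)%R.
  { apply Rgt_not_eq. apply sin_gt_0; lra. }
  unfold Jr. rewrite <- (cos_acos x) at 1 by lra. rewrite J_phalf_cos; auto.
Qed.

Lemma sqrt_split x : (-1 < x < 1)%R -> sqrt (1 - x ^ 2) = (sqrt (1 - x) * sqrt (1 + x))%R.
Proof.
  intros H. rewrite <- sqrt_mult by lra. f_equal. ring.
Qed.

Lemma h_ident a j k x : (-1 < x < 1)%R ->
  (Jr a j x * Jr a k x * wgt a x = dPhi a j k (acos x) / sqrt (1 - x ^ 2))%R.
Proof.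
  intros Hx. pose proof (acos_bound_lt x Hx) as Hb.
  assert (Hs1 : (0 < sqrt (1 - x))%R) by (apply sqrt_lt_R0; lra).
  assert (Hs2 : (0 < sqrt (1 + x))%R) by (apply sqrt_lt_R0; lra).
  rewrite sqrt_split by auto.
  set (t := acos x) in *.
  destruct a; unfold wgt, aval.
  - rewrite !Jr_m by auto. rewrite !Rpower_mhalf by lra. fold t. simpl.
    rewrite Rmult_minus_distr_r, Rmult_plus_distr_r, cos_minus, cos_plus. field. lra.
  - rewrite !Jr_p by auto. rewrite Rpower_half, Rpower_mhalf by lra. fold t. simpl.
    assert (Ht2 : (0 < sin (t / 2))%R) by (apply sin_gt_0; lra).
    assert (E1 : (1 - x = 2 * sin (t / 2) ^ 2)%R).
    { rewrite <- (cos_acos x) by lra. fold t. replace t with (2 * (t / 2))%R at 1 by field.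
      rewrite cos_2a_sin. ring. }
    assert (E2 : (sqrt (1 - x) * sqrt (1 - x) = 1 - x)%R) by (apply sqrt_sqrt; lra).
    replace ((INR j - INR k) * t)%R with ((INR j + 1/2) * t - (INR k + 1/2) * t)%R by ring.
    replace ((INR j + INR k + 1) * t)%R with ((INR j + 1/2) * t + (INR k + 1/2) * t)%R by field.
    rewrite cos_minus, cos_plus.
    apply (Rmult_eq_reg_r (sqrt (1 - x) * sqrt (1 + x))); [|nra].
    field_simplify; [|lra|lra].
    rewrite pow2_sqrt by lra. rewrite E1.
    field. lra.
Qed.

Lemma Phi_val a j k : (Phi a j k PI - Phi a j k 0 = if Nat.eqb j k then PI / Wt a j else 0)%R.
Proof.
  assert (Z1 : (INR j - INR k = IZR (Z.of_nat j - Z.of_nat k))%R).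
  { rewrite minus_IZR, <- !INR_IZR_INZ. reflexivity. }
  assert (Z2 : (INR j + INR k = IZR (Z.of_nat j + Z.of_nat k))%R).
  { rewrite plus_IZR, <- !INR_IZR_INZ. reflexivity. }
  assert (Z3 : (INR j + INR k + 1 = IZR (Z.of_nat j + Z.of_nat k + 1))%R).
  { rewrite !plus_IZR, <- !INR_IZR_INZ. reflexivity. }
  destruct a; simpl Phi; rewrite !Sfun_0.
  - rewrite Z1, Z2, !Sfun_PI.
    destruct (Nat.eqb j k) eqn:E.
    + apply Nat.eqb_eq in E. subst.
      replace (Z.of_nat k - Z.of_nat k)%Z with 0%Z by lia. simpl Z.eqb.
      destruct k; simpl.
      * field.
      * replace (Z.eqb (Z.pos (Pos.of_succ_nat k) + Z.pos (Pos.of_succ_nat k)) 0) with false.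
        field. symmetry; apply Z.eqb_neq; lia.
    + apply Nat.eqb_neq in E.
      replace (Z.eqb (Z.of_nat j - Z.of_nat k) 0) with false by (symmetry; apply Z.eqb_neq; lia).
      replace (Z.eqb (Z.of_nat j + Z.of_nat k) 0) with false by (symmetry; apply Z.eqb_neq; lia).
      field.
  - rewrite Z1, Z3, !Sfun_PI.
    replace (Z.eqb (Z.of_nat j + Z.of_nat k + 1) 0) with false by (symmetry; apply Z.eqb_neq; lia).
    destruct (Nat.eqb j k) eqn:E.
    + apply Nat.eqb_eq in E. subst.
      replace (Z.of_nat k - Z.of_nat k)%Z with 0%Z by lia. simpl Z.eqb. simpl Wt. cbv iota. field.
    + apply Nat.eqb_neq in E.
      replace (Z.eqb (Z.of_nat j - Z.of_nat k) 0) with false by (symmetry; apply Z.eqb_neq; lia).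
      field.
Qed.

Lemma rsum_delta_nat (f : nat -> R) s n : (s < n)%nat ->
  rsum (fun k => if Nat.eqb s k then f k else 0%R) n = f s.
Proof.
  intros H. induction H; simpl.
  - rewrite Nat.eqb_refl. rewrite (rsum_ext _ (fun _ => 0%R)).
    assert (rsum (fun _ => 0%R) s = 0%R) as ->. { clear. induction s; simpl; auto. rewrite IHs; ring. } ring.
    intros k Hk. destruct (Nat.eqb s k) eqn:E; auto. apply Nat.eqb_eq in E; lia.
  - rewrite IHle. destruct (Nat.eqb s m) eqn:E. apply Nat.eqb_eq in E; lia. ring.
Qed.

Lemma rsum_der (F dF : nat -> R -> R) n t : (forall k, is_derive (F k) t (dF k t)) ->
  is_derive (fun t => rsum (fun k => F k t) n) t (rsum (fun k => dF k t) n).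
Proof.
  intros H. induction n; simpl.
  - apply Rder_const.
  - apply Rder_plus; auto.
Qed.

Lemma rsum_exder (F : nat -> R -> R) n t : (forall k, ex_derive (F k) t) ->
  ex_derive (fun t => rsum (fun k => F k t) n) t.
Proof.
  intros H. induction n; simpl.
  - eexists; apply Rder_const.
  - destruct IHn as [l1 H1]. destruct (H n) as [l2 H2]. eexists. apply Rder_plus; eauto.
Qed.

Lemma outer a s1 (M : nat -> R) n (K : C) : (s1 < n)%nat ->
  @is_RInt_gen C_R_NormedModule
    (fun x => K * RtoC (Jr a s1 x * wgt a x * rsum (fun k => M k * Jr a k x)%R n))%C
    (at_right (-1)) (at_left 1) (K * RtoC (M s1 * PI / Wt a s1))%C.
Proof.
  intros Hn.
  set (Psi := fun t => rsum (fun k => M k * Phi a s1 k t)%R n).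
  set (dPsi := fun t => rsum (fun k => M k * dPhi a s1 k t)%R n).
  replace (M s1 * PI / Wt a s1)%R with (Psi PI - Psi 0)%R.
  apply gen_acos with (dPsi := dPsi).
  - intros t. unfold Psi, dPsi. apply (rsum_der (fun k t => M k * Phi a s1 k t)%R (fun k t => M k * dPhi a s1 k t)%R).
    intros k. eapply is_derive_eq. apply Rder_mult. apply Rder_const. apply Phi_der. apply Req; ring.
  - intros t. unfold dPsi. apply (rsum_exder (fun k t => M k * dPhi a s1 k t)%R).
    intros k. destruct (dPhi_ex a s1 k t) as [l Hl]. eexists. apply Rder_mult. apply Rder_const. exact Hl.
  - intros x Hx. unfold dPsi.
    rewrite <- (rsum_scal _ n (Jr a s1 x * wgt a x)).
    unfold Rdiv. rewrite (Rmult_comm (rsum _ n)), <- rsum_scal. apply rsum_ext. intros k _.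
    pose proof (h_ident a s1 k x Hx) as E. unfold Rdiv in E.
    transitivity (M k * (Jr a s1 x * Jr a k x * wgt a x))%R. ring. rewrite E. ring.
  - unfold Psi. rewrite <- (rsum_delta_nat (fun k => M k * PI / Wt a s1)%R s1 n Hn).
    assert (E : forall (f g : nat -> R) n, (rsum f n - rsum g n = rsum (fun k => f k - g k) n)%R).
    { intros f g m; induction m; simpl. ring. rewrite <- IHm; ring. }
    rewrite E. apply rsum_ext. intros k _.
    replace (M k * Phi a s1 k PI - M k * Phi a s1 k 0)%R with (M k * (Phi a s1 k PI - Phi a s1 k 0))%R by ring.
    rewrite Phi_val. destruct (Nat.eqb s1 k) eqn:Ek. apply Nat.eqb_eq in Ek; subst. unfold Rdiv; ring. ring.
Qed.

Lemma Cpowz_neg z n1 n2 : (n1 <= n2)%nat -> Cpowz z (Z.of_nat n1 - Z.of_nat n2) = (/ Cpow z (n2 - n1))%C.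
Proof.
  intros H. unfold Cpowz. destruct (Z.leb 0 (Z.of_nat n1 - Z.of_nat n2)) eqn:E.
  - apply Z.leb_le in E. assert (n1 = n2) by lia. subst. rewrite Nat.sub_diag.
    replace (Z.of_nat n2 - Z.of_nat n2)%Z with 0%Z by lia. simpl. rewrite Cinv_1. reflexivity.
  - f_equal. f_equal. lia.
Qed.

Lemma Wt_pos a s : (0 < Wt a s)%R.
Proof. destruct a, s; simpl; lra. Qed.

Lemma gamma_gen n1 n2 a1 a2 s1 s2 c r (P : R -> R) (M : nat -> R) N :
  (n1 <= n2)%nat -> (s1 < N)%nat ->
  (forall x, (-1 < x < 1)%R ->
     CI c r (fun u => J a2 s2 u * / Cpow (u - 1) (n2 - n1) / (RtoC x - u))%C (- tpi * RtoC (P x))%C) ->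
  (forall x, (-1 < x < 1)%R -> P x = rsum (fun k => M k * Jr a1 k x)%R N) ->
  Gamma_is n1 a1 s1 n2 a2 s2 c r (RtoC (M s1)).
Proof.
  intros Hn HN HI HP.
  exists (- tpi * RtoC (M s1 * PI / Wt a1 s1))%C. split.
  - eapply is_RInt_gen_ext; [|apply (outer a1 s1 M N (- tpi)%C HN)].
    apply (Filter_prod _ _ _ (fun a => (-1 < a < 1)%R) (fun b => (-1 < b < 1)%R)).
    + assert (H1 : (0 < 1)%R) by lra. exists (mkposreal _ H1). intros y Hy Hy1. simpl in Hy.
      unfold ball in Hy; simpl in Hy; unfold AbsRing_ball, abs, minus, plus, opp in Hy; simpl in Hy.
      apply Rabs_def2 in Hy. lra.
    + assert (H1 : (0 < 1)%R) by lra. exists (mkposreal _ H1). intros y Hy Hy1. simpl in Hy.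
      unfold ball in Hy; simpl in Hy; unfold AbsRing_ball, abs, minus, plus, opp in Hy; simpl in Hy.
      apply Rabs_def2 in Hy. lra.
    + intros a b Ha Hb x Hx. simpl in Hx.
      assert (Hx' : (-1 < x < 1)%R) by (apply (in_range a b x Ha Hb); lra).
      symmetry. apply (is_RInt_unique (V := C_R_CompleteNormedModule)).
      eapply (is_RInt_val (V := C_R_NormedModule)).
      * eapply is_RInt_ext; [|apply (CI_scal _ _ _ _ (J a1 s1 (RtoC x) * RtoC (wgt a1 x))%C (HI x Hx'))].
        intros th _. cbv beta. unfold Gintegrand. rewrite Cpowz_neg by auto. unfold wgt. apply Ceq.
        unfold Cdiv; ring.
      * rewrite J_real, HP by auto. rewrite !RtoC_mult. apply Ceq; ring.
  - assert (Et : (RtoC (2 * PI) * Ci)%C = tpi).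
    { unfold tpi, RtoC, Ci, Cmult; simpl. f_equal; ring. }
    rewrite Et. pose proof PI_RGT_0. pose proof (Wt_pos a1 s1).
    assert (Htp : tpi <> 0%C).
    { intro E. apply (f_equal snd) in E. unfold tpi in E; simpl in E. lra. }
    rewrite !RtoC_div by lra. rewrite RtoC_opp, !RtoC_mult.
    apply Ceq. field. repeat split; auto; apply RtoC_nz; lra.
Qed.

Theorem proposition4p7 :
  forall (s1 s2 n1 n2 : nat), (1 <= n1)%nat -> (1 <= n2)%nat ->
  forall (c : C) (r : R),
    (forall t : R, (-1 <= t <= 1)%R -> (Cmod (RtoC t - c) < r)%R) ->
    ((n1 <= n2)%nat ->
       Gamma_is n1 mhalf s1 n2 phalf s2 c r
         (RtoC (mconv (mpow (mconv Tm phim) (n2 - n1)) Tm s2 s1))) /\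
    ((n1 < n2)%nat ->
       Gamma_is n1 phalf s1 n2 phalf s2 c r
         (RtoC (mpow (mconv Tm phim) (n2 - n1) s2 s1))) /\
    ((n1 < n2)%nat ->
       Gamma_is n1 phalf s1 n2 mhalf s2 c r
         (RtoC (mconv (mpow (mconv phim Tm) (n2 - n1 - 1)) phim s2 s1))) /\
    ((n1 < n2)%nat ->
       Gamma_is n1 mhalf s1 n2 mhalf s2 c r
         (RtoC (mpow (mconv phim Tm) (n2 - n1) s2 s1))).
Proof.
  intros s1 s2 n1 n2 H1 H2 c r Hin.
  set (N := S (s1 + s2)).
  split; [|split; [|split]]; intros Hn.
  - apply (gamma_gen _ _ _ _ _ _ c r (fun x => FV (n2 - n1) s2 x)
             (fun k => mconv (mpow (mconv Tm phim) (n2 - n1)) Tm s2 k) N); [lia|unfold N; lia| |].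
    + intros x Hx. apply (proj2 (IntTV c r x Hin Hx (n2 - n1))).
    + intros x Hx. apply Exp1. unfold N; lia.
  - apply (gamma_gen _ _ _ _ _ _ c r (fun x => FV (n2 - n1) s2 x)
             (fun k => mpow (mconv Tm phim) (n2 - n1) s2 k) N); [lia|unfold N; lia| |].
    + intros x Hx. apply (proj2 (IntTV c r x Hin Hx (n2 - n1))).
    + intros x Hx. apply Exp2. unfold N; lia.
  - apply (gamma_gen _ _ _ _ _ _ c r (fun x => FT (n2 - n1) s2 x)
             (fun k => mconv (mpow (mconv phim Tm) (n2 - n1 - 1)) phim s2 k) N); [lia|unfold N; lia| |].
    + intros x Hx. apply (proj1 (IntTV c r x Hin Hx (n2 - n1))).
    + intros x Hx. set (m := (n2 - n1 - 1)%nat). replace (n2 - n1)%nat with (S m) by (unfold m; lia). apply Exp3. unfold N; lia.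
  - apply (gamma_gen _ _ _ _ _ _ c r (fun x => FT (n2 - n1) s2 x)
             (fun k => mpow (mconv phim Tm) (n2 - n1) s2 k) N); [lia|unfold N; lia| |].
    + intros x Hx. apply (proj1 (IntTV c r x Hin Hx (n2 - n1))).
    + intros x Hx. apply Exp4. unfold N; lia.
Qed.
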